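(* Let $k\ge0$, $n>2k$ and $\epsilon>0$. Fix any sequence $(s_{k,t})_{t=k+1}^{n-k}$ of maps $s_{k,t}:\mathcal Z^{2k+1}\to\hat{\mathcal X}$. Then for all $x^n\in\mathcal X^n$, $$\Pr\Big(L(x_{k+1}^{n-k},Z^n)-\tilde L(Z^n)>\epsilon\Big)\le(k+1)\exp\Big(-\frac{2(n-2k)\epsilon^2}{(k+1)L_{\max}^2}\Big)$$ and $$\Pr\Big(\tilde L(Z^n)-L(x_{k+1}^{n-k},Z^n)>\epsilon\Big)\le(k+1)\exp\Big(-\frac{2(n-2k)\epsilon^2}{(k+1)L_{\max}^2}\Big),$$ where $L(x_{k+1}^{n-k},z^n)=\frac1{n-2k}\sum_{t=k+1}^{n-k}\Lambda\big(x_t,s_{k,t}(z_{t-k}^{t+k})\big)$ and $\tilde L(z^n)=\frac1{n-2k}\sum_{t=k+1}^{n-k}\ell\big(z_t,s_{k,t}(\mathbf c_t,\cdot)\big)$.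
   Context: Let $\mathcal X,\mathcal Z,\hat{\mathcal X}$ be finite alphabets and $\Pi=\{\Pi(x,z)\}$ a $|\mathcal X|\times|\mathcal Z|$ stochastic matrix (discrete memoryless channel) of full row rank. For deterministic $x^n\in\mathcal X^n$, the channel output $Z^n$ has independent components with $\Pr(Z_t=z)=\Pi(x_t,z)$. Fix a loss $\Lambda:\mathcal X\times\hat{\mathcal X}\to[0,\infty)$, $\Lambda_{\max}=\max_{x,\hat x}\Lambda(x,\hat x)$. Let $\mathcal S$ be the set of all maps $s:\mathcal Z\to\hat{\mathcal X}$. Fix a real $|\mathcal Z|\times|\mathcal X|$ matrix $H$ with $\Pi H=I$; $h(z)\in\mathbb R^{\mathcal X}$ is the column vector equal to the $z$-th row of $H$. For $s\in\mathcal S$, $\rho_x(s)=\sum_z\Lambda(x,s(z))\Pi(x,z)$ and $\ell(z,s)=h(z)^T\rho(s)$. Let $\ell_{\max}=\max_{z,s}\ell(z,s)-\min_{z,s}\ell(z,s)$, $L_{\max}=\Lambda_{\max}+\ell_{\max}$. For $z^n$ and $k+1\le t\le n-k$, the context is $\mathbf c_t=(z_{t-k}^{t-1},z_{t+1}^{t+k})$, and $s_{k,t}(\mathbf c_t,\cdot)\in\mathcal S$ is the map $z\mapsto s_{k,t}(z_{t-k}^{t-1},z,z_{t+1}^{t+k})$. *)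

(* Defs.v *)
From HB Require Import structures.
From mathcomp Require Import all_boot all_order all_algebra.
From mathcomp Require Import all_classical all_reals all_analysis.
Set Implicit Arguments. Unset Strict Implicit. Unset Printing Implicit Defensive.
Import Order.TTheory GRing.Theory Num.Theory.
Local Open Scope ring_scope.

Section Defs.
Variables (R : realType) (X Z Xh : finType).

Definition stochastic (Pi : X -> Z -> R) : Prop :=
  (forall x z, 0 <= Pi x z) /\ (forall x, \sum_z Pi x z = 1).

Definition chan_mx (Pi : X -> Z -> R) : 'M[R]_(#|X|, #|Z|) :=
  \matrix_(i < #|X|, j < #|Z|) Pi (enum_val i) (enum_val j).

Definition full_row_rank (Pi : X -> Z -> R) : Prop := row_free (chan_mx Pi).

Definition chan_right_inverse (Pi : X -> Z -> R) (H : Z -> X -> R) : Prop :=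
  forall x x', \sum_z Pi x z * H z x' = (x == x')%:R.

Definition rho (Pi : X -> Z -> R) (Lam : X -> Xh -> R) (s : {ffun Z -> Xh}) (x : X) : R :=
  \sum_z Lam x (s z) * Pi x z.

Definition ell (Pi : X -> Z -> R) (H : Z -> X -> R) (Lam : X -> Xh -> R)
  (z : Z) (s : {ffun Z -> Xh}) : R :=
  \sum_x H z x * rho Pi Lam s x.

Definition Lam_max (Lam : X -> Xh -> R) : R := \big[Num.max/0]_(x : X) \big[Num.max/0]_(xh : Xh) Lam x xh.

Definition ell_values Pi H Lam : seq R :=
  [seq ell Pi H Lam z s | z <- enum Z, s <- enum {ffun Z -> Xh}].

Definition seq_max (l : seq R) : R := foldr Num.max (head 0 l) l.
Definition seq_min (l : seq R) : R := foldr Num.min (head 0 l) l.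

Definition ell_max Pi H Lam : R :=
  seq_max (ell_values Pi H Lam) - seq_min (ell_values Pi H Lam).

Definition L_max Pi H Lam : R := Lam_max Lam + ell_max Pi H Lam.

(* Time indices are 0-based: t ranges over k <= t < n - k
   (paper: k+1 <= t <= n-k).  Window z_{t-k}^{t+k} as a (2k+1)-vector;
   out-of-range indices never occur for t in range (default z t). *)
Definition window (n k : nat) (zn : 'I_n -> Z) (t : 'I_n) : {ffun 'I_(2*k+1) -> Z} :=
  [ffun j : 'I_(2*k+1) => zn (insubd t (t - k + j)%N)].

Definition window_rep (n k : nat) (zn : 'I_n -> Z) (t : 'I_n) (z0 : Z)
  : {ffun 'I_(2*k+1) -> Z} :=
  [ffun j : 'I_(2*k+1) => if (j == k :> nat) then z0 else zn (insubd t (t - k + j)%N)].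

Definition ctx_map (n k : nat) (s : nat -> {ffun 'I_(2*k+1) -> Z} -> Xh)
  (zn : 'I_n -> Z) (t : 'I_n) : {ffun Z -> Xh} :=
  [ffun z0 => s t (window_rep k zn t z0)].

Definition true_loss (n k : nat) (Lam : X -> Xh -> R)
  (s : nat -> {ffun 'I_(2*k+1) -> Z} -> Xh) (xn : 'I_n -> X) (zn : 'I_n -> Z) : R :=
  (n - 2*k)%:R^-1 * \sum_(t < n | (k <= t)%N && (t < n - k)%N) Lam (xn t) (s t (window k zn t)).

Definition est_loss (n k : nat) Pi H (Lam : X -> Xh -> R)
  (s : nat -> {ffun 'I_(2*k+1) -> Z} -> Xh) (zn : 'I_n -> Z) : R :=
  (n - 2*k)%:R^-1 * \sum_(t < n | (k <= t)%N && (t < n - k)%N) ell Pi H Lam (zn t) (ctx_map s zn t).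

(* Pr(E) for Z^n the output of the memoryless channel Pi on input xn *)
Definition chan_prob (n : nat) (Pi : X -> Z -> R) (xn : 'I_n -> X)
  (E : {ffun 'I_n -> Z} -> bool) : R :=
  \sum_(zn : {ffun 'I_n -> Z} | E zn) \prod_(t < n) Pi (xn t) (zn t).

End Defs.

(* Main.v *)
Require Import Defs.
From HB Require Import structures.
From mathcomp Require Import all_boot all_order all_algebra.
From mathcomp Require Import all_classical all_reals all_analysis.
From mathcomp Require Import ring lra zify.
Import Order.TTheory GRing.Theory Num.Theory.
Import numFieldNormedType.Exports.
Local Open Scope ring_scope.


Local Open Scope classical_set_scope.
Lemma mono0 (R : realType) (f df : R -> R) :
  (forall x : R, 0 <= x -> is_derive x (1:R) f (df x)) ->
  (forall x : R, 0 <= x -> df x <= 0) -> forall u : R, 0 <= u -> f u <= f 0.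
Proof.
move=> hd hdf u u0.
have hd' : forall x, x \in `]0, u[%R -> is_derive x (1:R) f (df x).
  by move=> x; rewrite in_itv /= => /andP[/ltW x0 _]; exact: hd.
have hc : {within `[0, u], continuous f}.
  apply: continuous_in_subspaceT => x /[!inE] /=; rewrite in_itv /= => /andP[x0 _].
  have := hd x x0 => -[dv _].
  exact/differentiable_continuous/derivable1_diffP.
have [c cin E] := MVT_segment u0 hd' hc.
rewrite -subr_le0 E subr0 mulr_le0_ge0 //.
by apply: hdf; move: cin; rewrite in_itv /= => /andP[].
Qed.

Local Close Scope classical_set_scope.
Lemma w_gt0 (R : realType) (th x : R) : 0 <= th <= 1 -> 0 < 1 - th + th * expR x.
Proof.
case/andP=> h0 h1; have [->|thlt] := eqVneq th 1.
  by rewrite subrr add0r mul1r expR_gt0.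
rewrite ltr_wpDr ?mulr_ge0 ?expR_ge0 // subr_gt0 lt_neqAle thlt h1 //.
Qed.

Lemma hoeff_p (R : realType) (th u : R) : 0 <= th <= 1 -> 0 <= u ->
  th * expR u / (1 - th + th * expR u) - th - u / 4 <= 0.
Proof.
move=> hth u0.
pose w x := 1 - th + th * expR x.
pose p x := th * expR x / w x.
pose g x := p x - th - x / 4.
have wn0 x : w x != 0 by rewrite gt_eqF // w_gt0.
have dg : forall x : R, 0 <= x -> is_derive x (1:R) g (p x * (1 - p x) - 1/4).
  move=> x _.
  rewrite /g /p.
  apply: trigger_derive.
  have := wn0 x; rewrite /GRing.scale /= => wx.
  by field; exact: wx.
have := @mono0 R g _ dg _ u u0.
rewrite /g /p /w expR0 mulr1 subrK divr1 subrr mul0r subr0 => -> //.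
move=> x _; rewrite -/(w x) -/(p x).
have : 0 <= (p x - 1/2) ^+ 2 by apply: sqr_ge0.
rewrite expr2; nra.
Qed.

Lemma hoeff_core (R : realType) (th u : R) : 0 <= th <= 1 -> 0 <= u ->
  1 - th + th * expR u <= expR (th * u + u * u / 8).
Proof.
move=> hth u0.
pose w x := 1 - th + th * expR x.
pose h x := - (th * x) - x * x / 8.
pose F x := w x * (expR \o h) x.
have wn0 x : 0 < w x by apply: w_gt0.
have dF : forall x : R, 0 <= x -> is_derive x (1:R) F
   (expR (h x) * w x * (th * expR x / w x - th - x / 4)).
  move=> x _; rewrite /F /w /h.
  apply: trigger_derive.
  have := wn0 x; rewrite /w /GRing.scale /= => /gt_eqF/negbT wx.
  by field; exact: wx.
have hd : forall x : R, 0 <= x ->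
    expR (h x) * w x * (th * expR x / w x - th - x / 4) <= 0.
  move=> x x0; rewrite -mulrA; apply: mulr_ge0_le0; first exact: expR_ge0.
  by apply: mulr_ge0_le0; [exact: ltW | exact: hoeff_p].
have := @mono0 R F _ dF hd u u0.
rewrite /F /= /h /w expR0 !mulr0 !mul0r mulr1 subrK oppr0 addr0 expR0 mulr1.
have -> : - (th * u) - u * u / 8 = - (th * u + u * u / 8) by rewrite opprD.
by rewrite expRN ler_pdivrMr ?expR_gt0 // mul1r.
Qed.

Lemma chord (R : realType) (A B d lam : R) : A <= d <= B ->
  expR (lam * d) * (B - A) <= (B - d) * expR (lam * A) + (d - A) * expR (lam * B).
Proof.
case/andP=> hA hB.
have e1 : expR (lam * d) * (1 + lam * (A - d)) <= expR (lam * A).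
  have -> : lam * A = lam * d + lam * (A - d) by ring.
  by rewrite expRD ler_pM2l ?expR_gt0 // expR_ge1Dx.
have e2 : expR (lam * d) * (1 + lam * (B - d)) <= expR (lam * B).
  have -> : lam * B = lam * d + lam * (B - d) by ring.
  by rewrite expRD ler_pM2l ?expR_gt0 // expR_ge1Dx.
have h1 : 0 <= B - d by rewrite subr_ge0.
have h2 : 0 <= d - A by rewrite subr_ge0.
have := ler_wpM2l h1 e1; have := ler_wpM2l h2 e2.
set E := expR (lam * d) => f2 f1.
have -> : E * (B - A) = (B - d) * (E * (1 + lam * (A - d))) + (d - A) * (E * (1 + lam * (B - d))) by ring.
exact: lerD.
Qed.

Lemma hoeffding_lemma (R : realType) (T : finType) (q d : T -> R) (A B lam : R) :
  (forall z, 0 <= q z) -> \sum_z q z = 1 -> (forall z, A <= d z <= B) ->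
  \sum_z q z * d z = 0 -> 0 <= lam ->
  \sum_z q z * expR (lam * d z) <= expR (lam * lam * ((B - A) * (B - A)) / 8).
Proof.
move=> q0 q1 hd qd0 lam0.
have hA : A <= 0.
  rewrite -qd0 -[A]mul1r -q1 mulr_suml; apply: ler_sum => z _.
  by apply: ler_wpM2l => //; case/andP: (hd z).
have hB : 0 <= B.
  rewrite -qd0 -[B]mul1r -q1 mulr_suml; apply: ler_sum => z _.
  by apply: ler_wpM2l => //; case/andP: (hd z).
have [AB|AB] := eqVneq (B - A) 0.
  have A0 : A = 0 by lra.
  have B0 : B = 0 by lra.
  have -> : \sum_z q z * expR (lam * d z) = \sum_z q z.
    apply: eq_bigr => z _; have := hd z; rewrite A0 B0 => hz.
    have -> : d z = 0 by lra.
    by rewrite mulr0 expR0 mulr1.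
  by rewrite q1 AB mulr0 mulr0 mul0r expR0.
have BA : 0 < B - A by rewrite lt_neqAle eq_sym AB subr_ge0 (le_trans hA hB).
set eA := expR (lam * A); set eB := expR (lam * B).
have step : \sum_z q z * expR (lam * d z) <= (B * eA - A * eB) / (B - A).
  rewrite ler_pdivlMr // mulr_suml.
  apply: (@le_trans _ _ (\sum_z q z * ((B - d z) * eA + (d z - A) * eB))).
    apply: ler_sum => z _; rewrite -mulrA; apply: ler_wpM2l => //.
    exact: chord.
  have -> : \sum_z q z * ((B - d z) * eA + (d z - A) * eB) =
      (B * eA - A * eB) * \sum_z q z - (eA - eB) * \sum_z q z * d z.
    rewrite mulr_sumr mulr_sumr -sumrB; apply: eq_bigr => z _; ring.
  by rewrite q1 qd0 mulr0 subr0 mulr1.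
apply: (le_trans step).
pose th := - A / (B - A).
pose u := lam * (B - A).
have hth : 0 <= th <= 1.
  apply/andP; split; first by rewrite /th divr_ge0 // ?oppr_ge0 // ltW.
  rewrite /th ler_pdivrMr // mul1r; lra.
have u0 : 0 <= u by rewrite /u mulr_ge0 // ltW.
have := @hoeff_core R th u hth u0.
have e : (B * eA - A * eB) / (B - A) = eA * (1 - th + th * expR u).
  have -> : eB = eA * expR u.
    by rewrite /eB /eA /u -expRD; congr expR; ring.
  rewrite /th; field; exact: AB.
rewrite e => H.
apply: (le_trans (ler_wpM2l (expR_ge0 _) H)).
rewrite /eA -expRD le_eqVlt; apply/orP; left; apply/eqP; congr expR.
rewrite /th /u; field; exact: AB.
Qed.

Section Prod.
Variables (R : realType) (T Z : finType) (p : T -> Z -> R).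
Hypothesis p0 : forall t z, 0 <= p t z.
Hypothesis p1 : forall t, \sum_z p t z = 1.

Definition mu (f : {ffun T -> Z}) := \prod_i p i (f i).
Definition upd (f : {ffun T -> Z}) t z : {ffun T -> Z} :=
  [ffun i => if i == t then z else f i].

Lemma upd_id f t z : upd f t z t = z.
Proof. by rewrite /upd ffunE eqxx. Qed.
Lemma upd_ne f t z i : i != t -> upd f t z i = f i.
Proof. by rewrite /upd ffunE => /negPf ->. Qed.
Lemma upd_upd f t z y : upd (upd f t z) t y = upd f t y.
Proof. by apply/ffunP => i; rewrite !ffunE; case: eqP. Qed.
Lemma upd_self f t : upd f t (f t) = f.
Proof. by apply/ffunP => i; rewrite !ffunE; case: eqP => // ->. Qed.

Lemma mu_ge0 f : 0 <= mu f.
Proof. by apply: prodr_ge0 => i _. Qed.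

Lemma mu_sum : \sum_f mu f = 1.
Proof.
rewrite /mu -(bigA_distr_bigA (fun i z => p i z)).
by rewrite big1 // => i _; rewrite p1.
Qed.

Lemma mu_upd f t z : mu f * p t z = p t (f t) * mu (upd f t z).
Proof.
rewrite /mu (bigD1 t) // [in RHS](bigD1 t) //= upd_id.
have -> : \prod_(i | i != t) p i (upd f t z i) = \prod_(i | i != t) p i (f i).
  by apply: eq_bigr => i it; rewrite upd_ne.
ring.
Qed.

Lemma integrate_coord (F : {ffun T -> Z} -> R) t :
  \sum_f mu f * F f = \sum_f mu f * (\sum_z p t z * F (upd f t z)).
Proof.
have -> : \sum_f mu f * (\sum_z p t z * F (upd f t z)) =
          \sum_(f : {ffun T -> Z}) \sum_z p t (f t) * (mu (upd f t z) * F (upd f t z)).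
  apply: eq_bigr => f _; rewrite mulr_sumr; apply: eq_bigr => z _.
  by rewrite mulrA mu_upd mulrA.
rewrite pair_big /=.
rewrite (reindex (fun gy : {ffun T -> Z} * Z => (upd gy.1 t gy.2, gy.1 t))) /=.
  rewrite -(pair_big xpredT xpredT (fun g y => p t ((upd g t y) t) * (mu (upd (upd g t y) t (g t)) * F (upd (upd g t y) t (g t))))) /=.
  apply: eq_bigr => g _.
  under eq_bigr => y _ do rewrite upd_id upd_upd upd_self.
  by rewrite -mulr_suml p1 mul1r.
exists (fun fz : {ffun T -> Z} * Z => (upd fz.1 t fz.2, fz.1 t)).
  by case=> g y _ /=; rewrite upd_upd upd_self upd_id.
by case=> f z _ /=; rewrite upd_upd upd_self upd_id.
Qed.

Lemma prod_bound (G : T -> {ffun T -> Z} -> R) (K : R) :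
  0 <= K -> (forall t f, 0 <= G t f) ->
  forall C : {set T},
  (forall t s, t \in C -> s \in C -> s != t -> forall f z, G t (upd f s z) = G t f) ->
  (forall t, t \in C -> forall f, \sum_z p t z * G t (upd f t z) <= K) ->
  \sum_f mu f * \prod_(t in C) G t f <= K ^+ #|C|.
Proof.
move=> K0 G0 C; have [m] := ubnP #|C|; elim: m C => // m IH C hC hloc hK.
have [C0|[t tC]] := set_0Vmem C.
  rewrite C0 cards0 expr0.
  under eq_bigr => f _ do rewrite big_set0 mulr1.
  by rewrite mu_sum.
pose C' := C :\ t.
have cC : #|C| = #|C'|.+1 by rewrite (cardsD1 t C) tC.
rewrite (integrate_coord _ t).
have -> : \sum_f mu f * (\sum_z p t z * \prod_(t0 in C) G t0 (upd f t z)) =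
   \sum_f (mu f * \prod_(s in C') G s f) * (\sum_z p t z * G t (upd f t z)).
  apply: eq_bigr => f _; rewrite -mulrA; congr (_ * _).
  rewrite mulr_sumr; apply: eq_bigr => z _.
  rewrite (bigD1 t) //=.
  have -> : \prod_(i in C | i != t) G i (upd f t z) = \prod_(s in C') G s f.
    rewrite /C' [RHS]big_mkcond [LHS]big_mkcond; apply: eq_bigr => s _.
    rewrite !inE andbC; case sC: (s \in C); case st: (s != t) => //=.
    by apply: hloc => //; rewrite eq_sym st.
  ring.
rewrite cC exprS.
apply: (@le_trans _ _ (\sum_f (mu f * \prod_(s in C') G s f) * K)).
  apply: ler_sum => f _; apply: ler_wpM2l; last exact: hK.
  by rewrite mulr_ge0 ?mu_ge0 // prodr_ge0.
rewrite -mulr_suml mulrC; apply: ler_wpM2l => //.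
apply: IH.
- by rewrite -ltnS -cC.
- by move=> a b; rewrite /C' !inE => /andP[_ aC] /andP[_ bC]; exact: hloc.
- by move=> a; rewrite /C' !inE => /andP[_ aC]; exact: hK.
Qed.

End Prod.

Lemma card_range (R : realType) (n k : nat) : (2 * k < n)%N ->
  \sum_(t < n | (k <= t)%N && (t < n - k)%N) (1 : R) = (n - 2 * k)%:R.
Proof.
move=> hn.
rewrite -(big_mkord (fun t => (k <= t)%N && (t < n - k)%N) (fun _ => (1:R))).
rewrite (@big_cat_nat _ _ _ k) //=; last lia.
rewrite [X in X + _]big1_seq ?add0r; last first.
  by move=> i /andP[/andP[ki _]]; rewrite mem_index_iota => /andP[_ ik]; lia.
rewrite (@big_cat_nat _ _ _ (n - k)) //=; [|lia|lia].
rewrite [X in _ + X]big1_seq ?addr0; last first.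
  by move=> i /andP[/andP[_ ki]]; rewrite mem_index_iota => /andP[ik _]; lia.
rewrite -big_filter.
have -> : [seq i <- index_iota k (n - k) | (k <= i)%N && (i < n - k)%N] = index_iota k (n - k).
  apply/all_filterP/allP => i; rewrite mem_index_iota //.
rewrite sumr_const_nat; congr (_%:R); lia.
Qed.

Arguments mu {R T Z}.
Arguments upd {T Z}.
Definition inrng {n : nat} (k : nat) (t : 'I_n) := (k <= t)%N && (t < n - k)%N.
Definition cls {n : nat} (k : nat) (t : 'I_n) : 'I_k.+1 := Ordinal (ltn_pmod t (ltn0Sn k)).

Lemma conc (R : realType) (Z : finType) (n k : nat) (p : 'I_n -> Z -> R)
  (D : 'I_n -> {ffun 'I_n -> Z} -> R) (A B eps : R) :
  (forall t z, 0 <= p t z) -> (forall t, \sum_z p t z = 1) ->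
  (2 * k < n)%N -> 0 < eps -> A < B ->
  (forall t, inrng k t -> forall f, \sum_z p t z * D t (upd f t z) = 0) ->
  (forall t, inrng k t -> forall f, A <= D t f <= B) ->
  (forall t s, inrng k t -> inrng k s -> s != t -> cls k t = cls k s ->
     forall f z, D t (upd f s z) = D t f) ->
  \sum_(f | eps * (n - 2 * k)%:R < \sum_(t | inrng k t) D t f) mu p f <=
  k.+1%:R * expR (- (2 * (n - 2 * k)%:R * eps ^+ 2) / (k.+1%:R * (B - A) ^+ 2)).
Proof.
move=> p0 p1 hn heps hAB hzero hrng hloc.
set N := (n - 2 * k)%:R.
set L := B - A.
have L0 : 0 < L by rewrite /L subr_gt0.
set lam := 4 * eps / (L * L).
set del := N * eps / (2 * k.+1%:R).
have lam0 : 0 < lam by rewrite /lam divr_gt0 ?mulr_gt0.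
pose C (j : 'I_k.+1) := [set t : 'I_n | inrng k t && (cls k t == j)].
pose G t (f : {ffun 'I_n -> Z}) := expR (lam * (D t f - eps / 2)).
pose Phi (f : {ffun 'I_n -> Z}) := \sum_(j < k.+1) expR (- (lam * del)) * \prod_(t in C j) G t f.
have Phi0 f : 0 <= Phi f.
  by apply: sumr_ge0 => j _; rewrite mulr_ge0 ?expR_ge0 // prodr_ge0 // => t _; exact: expR_ge0.
have point f : eps * N < \sum_(t | inrng k t) D t f -> 1 <= Phi f.
  move=> hf.
  pose a (j : 'I_k.+1) := \sum_(t | inrng k t && (cls k t == j)) (D t f - eps / 2) - del.
  have ePhi : Phi f = \sum_(j < k.+1) expR (lam * a j).
    apply: eq_bigr => j _; rewrite /a mulrBr mulr_sumr addrC expRD expR_sum.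
    congr (_ * _); apply: eq_bigl => t; by rewrite inE.
  have sa : \sum_(j < k.+1) a j = \sum_(t | inrng k t) D t f - eps * N.
    rewrite /a sumrB sumr_const card_ord.
    rewrite -(@partition_big _ _ _ _ _ _ (fun t => inrng k t) (cls k) xpredT) //.
    rewrite sumrB -(mulr1 (eps / 2)) -mulr_sumr.
    rewrite /inrng card_range // -/N /del; by field; rewrite addrC natr1 pnatr_eq0.
  have [/existsP[j aj]|/existsPn hall] := boolP [exists j, 0 < a j]; last first.
    have : \sum_(j < k.+1) a j <= 0.
      by apply: sumr_le0 => j _; rewrite leNgt; exact: hall.
    rewrite sa; lra.
  rewrite ePhi (bigD1 j) //=.
  apply: (@le_trans _ _ (expR (lam * a j))).
    apply: (le_trans _ (expR_ge1Dx _)); rewrite lerDl mulr_ge0 // ltW //.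
  by rewrite lerDl; apply: sumr_ge0 => i _; exact: expR_ge0.
have step1 : \sum_(f | eps * N < \sum_(t | inrng k t) D t f) mu p f <=
             \sum_f mu p f * Phi f.
  rewrite big_mkcond; apply: ler_sum => f _; case: ifP => hf.
    by rewrite -{1}[mu p f]mulr1 ler_wpM2l ?mu_ge0 ?point.
  by rewrite mulr_ge0 ?mu_ge0.
apply: (le_trans step1).
have hK : forall j, \sum_f mu p f * \prod_(t in C j) G t f <= 1.
  move=> j; rewrite -[X in _ <= X](expr1n R #|C j|).
  apply: (@prod_bound R _ _ p p0 p1 G 1 ler01).
  - by move=> t f; exact: expR_ge0.
  - move=> t s; rewrite !inE => /andP[tr /eqP tj] /andP[sr /eqP sj] st f z.
    by rewrite /G hloc // tj sj.
  - move=> t; rewrite inE => /andP[tr _] f.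
    have H := @hoeffding_lemma R Z (p t) (fun z => D t (upd f t z)) A B lam
      (p0 t) (p1 t) (fun z => hrng t tr _) (hzero t tr f) (ltW lam0).
    apply: (@le_trans _ _ ((\sum_z p t z * expR (lam * D t (upd f t z))) * expR (- (lam * eps / 2)))).
      rewrite mulr_suml le_eqVlt; apply/orP; left; apply/eqP; apply: eq_bigr => z _.
      by rewrite /G -mulrA -expRD; congr (_ * expR _); ring.
    apply: (le_trans (ler_wpM2r (expR_ge0 _) H)); rewrite -expRD.
    rewrite -[X in _ <= X]expR0 ler_expR -/L /lam.
    have -> : 4 * eps / (L * L) * (4 * eps / (L * L)) * (L * L) / 8 -
         4 * eps / (L * L) * eps / 2 = 0.
      by field; rewrite gt_eqF.
    by [].
have -> : \sum_f mu p f * Phi f =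
   \sum_(j < k.+1) expR (- (lam * del)) * \sum_f mu p f * \prod_(t in C j) G t f.
  under eq_bigr => f _ do rewrite /Phi mulr_sumr.
  rewrite exchange_big /=; apply: eq_bigr => j _; rewrite mulr_sumr.
  by apply: eq_bigr => f _; ring.
have S1 : \sum_(j < k.+1) expR (- (lam * del)) * (\sum_f mu p f * \prod_(t in C j) G t f)
   <= \sum_(j < k.+1) expR (- (lam * del)).
  apply: ler_sum => j _; rewrite -[X in _ <= X]mulr1; apply: ler_wpM2l; [exact: expR_ge0 | exact: hK].
apply: (le_trans S1).
rewrite sumr_const card_ord -(mulr_natl (expR _)); apply: ler_wpM2l => //.
rewrite le_eqVlt; apply/orP; left; apply/eqP; congr expR.
rewrite /lam /del; field.
rewrite gt_eqF //= addrC natr1 pnatr_eq0.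
Qed.

Section Win.
Variables (Z Xh : finType) (n k : nat).

Lemma val_win (t : 'I_n) (j : 'I_(2*k+1)) : inrng k t ->
  val (insubd t (t - k + j)%N) = (t - k + j)%N.
Proof.
rewrite /inrng => /andP[h1 h2]; rewrite val_insubd.
have -> : (t - k + j < n)%N by have := ltn_ord j; lia.
by [].
Qed.

Lemma win_range (t : 'I_n) (j : 'I_(2*k+1)) : (k <= t)%N ->
  (t - k <= val (insubd t (t - k + j)%N) <= t + k)%N.
Proof.
move=> h; rewrite val_insubd; case: ifP => _ /=; have := ltn_ord j; move: h; case: t => t0 ht0 /=; lia.
Qed.

Lemma window_upd (f : {ffun 'I_n -> Z}) (t : 'I_n) z : inrng k t ->
  window k (upd f t z) t = window_rep k f t z.
Proof.
move=> ht; apply/ffunP => j; rewrite !ffunE.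
have -> : (insubd t (t - k + j)%N == t) = (j == k :> nat).
  rewrite -val_eqE /= val_win //; move: ht; rewrite /inrng => /andP[h1 h2].
  by apply/eqP/eqP; lia.
by [].
Qed.

Lemma window_rep_upd (f : {ffun 'I_n -> Z}) (t : 'I_n) z z0 : inrng k t ->
  window_rep k (upd f t z) t z0 = window_rep k f t z0.
Proof.
move=> ht; apply/ffunP => j; rewrite !ffunE; case: eqP => // jk.
have -> : (insubd t (t - k + j)%N == t) = false.
  apply/negbTE; rewrite -val_eqE /= val_win //; move: ht; rewrite /inrng => /andP[h1 h2].
  by apply/eqP; lia.
by [].
Qed.

Lemma ctx_map_upd (s : nat -> {ffun 'I_(2*k+1) -> Z} -> Xh) (f : {ffun 'I_n -> Z}) (t : 'I_n) z :
  inrng k t -> ctx_map s (upd f t z) t = ctx_map s f t.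
Proof.
by move=> ht; apply/ffunP => z0; rewrite !ffunE window_rep_upd.
Qed.

Lemma window_loc (f g : {ffun 'I_n -> Z}) (t : 'I_n) :
  (k <= t)%N -> (forall i : 'I_n, (t - k <= i <= t + k)%N -> f i = g i) ->
  window k f t = window k g t.
Proof.
by move=> h hfg; apply/ffunP => j; rewrite !ffunE hfg // win_range.
Qed.

Lemma ctx_map_loc (s : nat -> {ffun 'I_(2*k+1) -> Z} -> Xh) (f g : {ffun 'I_n -> Z}) (t : 'I_n) :
  (k <= t)%N -> (forall i : 'I_n, (t - k <= i <= t + k)%N -> f i = g i) ->
  ctx_map s f t = ctx_map s g t.
Proof.
move=> h hfg; apply/ffunP => z0; rewrite !ffunE; congr (s _ _).
by apply/ffunP => j; rewrite !ffunE; case: ifP => // _; rewrite hfg // win_range.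
Qed.

Lemma far_aux (a b : nat) : (a < b)%N -> (a %% k.+1 = b %% k.+1)%N -> (a + k < b)%N.
Proof.
move=> ab e.
have hd : (k.+1 %| b - a)%N.
  rewrite -eqn_mod_dvd; last exact: ltnW.
  by apply/eqP.
have : (k.+1 <= b - a)%N by apply: dvdn_leq => //; rewrite subn_gt0.
lia.
Qed.

Lemma same_class_far (t u : 'I_n) : cls k t = cls k u -> u != t ->
  (u + k < t)%N || (t + k < u)%N.
Proof.
move=> e ne.
have e' : (t %% k.+1 = u %% k.+1)%N by move/(congr1 val): e.
have [tu|ut|tu] := ltngtP t u.
- by rewrite (@far_aux _ _ tu e') orbT.
- by rewrite (@far_aux _ _ ut (esym e')).
- by move: ne; rewrite -val_eqE /= tu eqxx.
Qed.

End Win.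

Lemma le_bigmax0 (R : realType) (I : finType) (F : I -> R) i :
  F i <= \big[Num.max/0]_j F j.
Proof.
have : i \in index_enum I := mem_index_enum i.
elim: (index_enum I) => // a l IH; rewrite inE big_cons => /orP[/eqP->|/IH h].
  by rewrite le_max lexx.
by rewrite le_max h orbT.
Qed.

Lemma bigmax0_ge0 (R : realType) (I : finType) (F : I -> R) :
  0 <= \big[Num.max/0]_j F j.
Proof.
elim: (index_enum I) => [|a l IH]; first by rewrite big_nil.
by rewrite big_cons le_max IH orbT.
Qed.

Lemma le_foldr_max (R : realType) (d : R) (l : seq R) x : x \in l -> x <= foldr Num.max d l.
Proof.
elim: l => // a l IH; rewrite inE /= => /orP[/eqP->|/IH h].
  by rewrite le_max lexx.
by rewrite le_max h orbT.
Qed.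

Lemma ge_foldr_min (R : realType) (d : R) (l : seq R) x : x \in l -> foldr Num.min d l <= x.
Proof.
elim: l => // a l IH; rewrite inE /= => /orP[/eqP->|/IH h].
  by rewrite ge_min lexx.
by rewrite ge_min h orbT.
Qed.

Lemma seq_min_le_max (R : realType) (l : seq R) : seq_min l <= seq_max l.
Proof.
case: l => [|a l]; first by rewrite /seq_min /seq_max.
apply: (@le_trans _ _ a).
  by apply: ge_foldr_min; rewrite inE eqxx.
by apply: le_foldr_max; rewrite inE eqxx.
Qed.

Theorem lemma2 (R : realType) (X Z Xh : finType)
  (Pi : X -> Z -> R) (H : Z -> X -> R) (Lam : X -> Xh -> R)
  (HPi : stochastic Pi) (Hrank : full_row_rank Pi) (HH : chan_right_inverse Pi H)
  (HLam : forall x xh, 0 <= Lam x xh)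
  (k n : nat) (hn : (2 * k < n)%N) (eps : R) (heps : 0 < eps)
  (s : nat -> {ffun 'I_(2*k+1) -> Z} -> Xh) (xn : 'I_n -> X) :
  let bound := k.+1%:R * expR (- (2 * (n - 2 * k)%:R * eps ^+ 2)
                 / (k.+1%:R * L_max Pi H Lam ^+ 2)) in
  chan_prob Pi xn (fun zn => true_loss Lam s xn zn - est_loss Pi H Lam s zn > eps)
    <= bound /\
  chan_prob Pi xn (fun zn => est_loss Pi H Lam s zn - true_loss Lam s xn zn > eps)
    <= bound.
Proof.
move=> bound.
case: HPi => Pi0 Pi1.
pose p t := Pi (xn t).
have p0 t z : 0 <= p t z by exact: Pi0.
have p1 t : \sum_z p t z = 1 by exact: Pi1.
pose N : R := (n - 2 * k)%:R.
have N0 : 0 < N by rewrite ltr0n; lia.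
set lo := seq_min (ell_values Pi H Lam).
set hi := seq_max (ell_values Pi H Lam).
set LM := Lam_max Lam.
have hLM x xh : Lam x xh <= LM.
  apply: (le_trans (@le_bigmax0 R _ (fun xh => Lam x xh) xh)).
  exact: (@le_bigmax0 R _ (fun x => \big[Num.max/0]_xh Lam x xh) x).
have LM0 : 0 <= LM by apply: (@bigmax0_ge0 R).
have hell z (f : {ffun Z -> Xh}) : lo <= ell Pi H Lam z f <= hi.
  have hin : ell Pi H Lam z f \in ell_values Pi H Lam.
    by apply: (allpairs_f (fun z f => ell Pi H Lam z f)); rewrite mem_enum.
  by rewrite (@ge_foldr_min R) // (@le_foldr_max R).
have hlohi : lo <= hi by apply: (@seq_min_le_max R).
have Le : L_max Pi H Lam = LM + (hi - lo) by [].
have prob1 (E : {ffun 'I_n -> Z} -> bool) : chan_prob Pi xn E <= 1.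
  rewrite -(@mu_sum R _ _ p p1) /chan_prob.
  rewrite [X in _ <= X](bigID E) /= lerDl; apply: sumr_ge0 => f _; exact: (@mu_ge0 R _ _ p p0).
have [Lpos|Lnpos] := ltP 0 (L_max Pi H Lam); last first.
  have L0 : L_max Pi H Lam = 0 by rewrite Le in Lnpos *; lra.
  have b1 : 1 <= bound.
    rewrite /bound L0 expr0n /= mulr0 invr0 mulr0 expR0 mulr1.
    by rewrite ler1n.
  by split; apply: (le_trans (prob1 _)).
pose D t (f : {ffun 'I_n -> Z}) :=
  Lam (xn t) (s t (window k f t)) - ell Pi H Lam (f t) (ctx_map s f t).
have Dzero t : inrng k t -> forall f, \sum_z p t z * D t (upd f t z) = 0.
  move=> ht f; set s0 := ctx_map s f t.
  have -> : \sum_z p t z * D t (upd f t z) =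
      \sum_z p t z * (Lam (xn t) (s0 z) - ell Pi H Lam z s0).
    apply: eq_bigr => z _; rewrite /D window_upd // upd_id ctx_map_upd //.
    by rewrite /s0 /ctx_map ffunE.
  rewrite /p; under eq_bigr => z _ do rewrite mulrBr.
  rewrite sumrB; apply/eqP; rewrite subr_eq0; apply/eqP.
  have -> : \sum_z Pi (xn t) z * ell Pi H Lam z s0 =
      \sum_x (\sum_z Pi (xn t) z * H z x) * rho Pi Lam s0 x.
    rewrite /ell; under eq_bigr => z _ do rewrite mulr_sumr.
    rewrite exchange_big /=; apply: eq_bigr => x _; rewrite mulr_suml.
    by apply: eq_bigr => z _; rewrite mulrA.
  under [RHS]eq_bigr => x _ do rewrite HH.
  rewrite (bigD1 (xn t)) //= eqxx mul1r [X in _ + X]big1 ?addr0.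
    by rewrite /rho; apply: eq_bigr => z _; rewrite mulrC.
  by move=> x /negPf; rewrite eq_sym => ->; rewrite mul0r.
have Drng t : inrng k t -> forall f, - hi <= D t f <= LM - lo.
  move=> _ f; rewrite /D; have := hell (f t) (ctx_map s f t).
  have := hLM (xn t) (s t (window k f t)); have := HLam (xn t) (s t (window k f t)).
  move=> h1 h2 /andP[h3 h4]; apply/andP; split; lra.
have Dloc t u : inrng k t -> inrng k u -> u != t -> cls k t = cls k u ->
    forall f z, D t (upd f u z) = D t f.
  move=> ht hu ut ctu f z.
  have far := @same_class_far n k t u ctu ut.
  have kt : (k <= t)%N by case/andP: ht.
  have agree : forall i : 'I_n, (t - k <= i <= t + k)%N -> upd f u z i = f i.
    move=> i hin; apply: upd_ne; rewrite -val_eqE /=; apply/eqP => e.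
    by move: far hin; rewrite e; lia.
  rewrite /D (@window_loc Z n k _ _ t kt agree) (@ctx_map_loc Z Xh n k s _ _ t kt agree) agree //; lia.
have hsum (zn : {ffun 'I_n -> Z}) : true_loss Lam s xn zn - est_loss Pi H Lam s zn =
    N^-1 * \sum_(t | inrng k t) D t zn.
  by rewrite /true_loss /est_loss -mulrBr -sumrB.
have hAB : - hi < LM - lo by lra.
have eB : LM - lo - - hi = L_max Pi H Lam by rewrite Le; ring.
split.
- rewrite /chan_prob.
  rewrite (eq_bigl (fun zn => eps * N < \sum_(t | inrng k t) D t zn)); last first.
    by move=> zn; rewrite hsum ltr_pdivlMl // mulrC.
  have := @conc R Z n k p D (- hi) (LM - lo) eps p0 p1 hn heps hAB Dzero Drng Dloc.
  by rewrite eB.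
- pose D2 t (f : {ffun 'I_n -> Z}) := - D t f.
  have D2zero t : inrng k t -> forall f, \sum_z p t z * D2 t (upd f t z) = 0.
    move=> ht f; rewrite /D2; under eq_bigr => z _ do rewrite mulrN.
    by rewrite sumrN Dzero // oppr0.
  have D2rng t : inrng k t -> forall f, lo - LM <= D2 t f <= hi.
    move=> ht f; rewrite /D2; have /andP[h1 h2] := Drng t ht f.
    apply/andP; split; lra.
  have D2loc t u : inrng k t -> inrng k u -> u != t -> cls k t = cls k u ->
      forall f z, D2 t (upd f u z) = D2 t f.
    by move=> ht hu ut ctu f z; rewrite /D2 Dloc.
  have hAB2 : lo - LM < hi by lra.
  have eB2 : hi - (lo - LM) = L_max Pi H Lam by rewrite Le; ring.
  rewrite /chan_prob.
  rewrite (eq_bigl (fun zn => eps * N < \sum_(t | inrng k t) D2 t zn)); last first.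
    move=> zn; rewrite -opprB hsum /D2 sumrN -mulrN.
    by rewrite ltr_pdivlMl // mulrC.
  have := @conc R Z n k p D2 (lo - LM) hi eps p0 p1 hn heps hAB2 D2zero D2rng D2loc.
  by rewrite eB2.
Qed.
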